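(* Let $\mathcal S$ be a signed group and let $\mathbf e=(e_1,e_2,\dots)$ be a basic sequence in $\mathcal S$ (finite or countably infinite). Let $C=[c_{jk}]$ with $c_{jk}=c(e_j,e_k)$ be its AC-matrix (so $c_{jj}=1$) and let $D=[d_{jk}]$, $d_{jk}=(1-c_{jk})/2\in\{0,1\}$. Then for all finitary $0$-$1$ sequences $\mathbf p,\mathbf q$, \[ \mathbf e^{\mathbf p}\,\mathbf e^{\mathbf q}=(-1)^{\sum_{j\ge1}\sum_{k>j} d_{jk}\,p_k\,q_j}\;\mathbf e^{\mathbf p+\mathbf q}, \qquad \mathbf e^{\mathbf p+\mathbf q}:=\prod_{n} e_n^{p_n+q_n}\ \text{(ordered by increasing $n$)} . \] Moreover, writing $\langle\mathbf p\rangle=\sum_n p_n$ and $\mathbf p\mathbf q=(p_nq_n)$: (1) $\mathbf e^{\mathbf p}\circ\mathbf e^{\mathbf q}=(-1)^{(\langle C\mathbf p,\mathbf q\rangle-\langle\mathbf p\rangle\langle\mathbf q\rangle)/2}$; (2) if $\mathbf e$ is anticommutative, $\mathbf e^{\mathbf p}\circ\mathbf e^{\mathbf q}=(-1)^{\langle\mathbf p\rangle\langle\mathbf q\rangle-\langle\mathbf p\mathbf q\rangle}$; (3) if $\mathcal G\subset\mathcal S$ is a subgroup generated by a basic sequence of length at least $2$ such that any two elements of $\mathcal G\setminus\{\pm1\}$ that are not equal up to sign anticommute, then the generating sequence has length exactly $2$, i.e. $\mathcal G$ has order $8$; (4) if $\mathbf e$ is anticommutative and $p=\langle\mathbf p\rangle$,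 then the signature of $\mathbf e^{\mathbf p}$ is $(\mathbf e^{\mathbf p})^2=\big(\prod_n e_n^{2p_n}\big)(-1)^{p(p-1)/2}$; in particular, if $\mathbf e$ is positive then $\mathbf e^{\mathbf p}$ is negative iff $p\equiv 2$ or $p\equiv 3 \pmod 4$, and if $\mathbf e$ is negative then $\mathbf e^{\mathbf p}$ is negative iff $p\equiv 2$ or $p\equiv1\pmod 4$; (5) for an anticommutative $\mathbf e$ of length $n$, let $s_+$ (resp. $s_-$) denote the number of negative elements among $\{\mathbf e^{\mathbf p}:\mathbf p\in\{0,1\}^n\}$ when $\mathbf e$ is positive (resp. negative). Then $s_+=b_2+b_3$ and $s_-=b_1+b_2$, where $b_q=\sum_{j\ge0,\ q+4j\le n}\binom{n}{q+4j}$.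
   Context: A signed group is a group $\mathcal S$ containing a central element $-1\neq1$ with $(-1)^2=1$ such that any two elements $e,f$ either commute ($ef=fe$) or anticommute ($ef=-fe$), and every element $e$ has signature $e^2\in\{1,-1\}$; $e$ is positive if $e^2=1$ and negative if $e^2=-1$, and a sequence is positive/negative (pure) if all its elements are. The commutativity function is $c(e,f)=e\circ f=1$ if $ef=fe$ and $-1$ if $ef=-fe$. For a sequence $\mathbf e=(e_n)$ and a finitary $0$-$1$ sequence $\mathbf p$ (i.e. $p_n\in\{0,1\}$, $p_n=0$ eventually), $\mathbf e^{\mathbf p}=e_1^{p_1}e_2^{p_2}\cdots$ with $e^0=1$, $e^1=e$. A sequence is basic if no $\mathbf e^{\mathbf p}$ with $\mathbf p\neq\mathbf 0$ equals $\pm1$. A sequence is anticommutative if any two distinct terms anticommute. *)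

(* Defs.v *)
From HB Require Import structures.
From mathcomp Require Import all_boot all_algebra.
From Stdlib Require Import ClassicalEpsilon.
From Stdlib Require Lists.List.
Set Implicit Arguments. Unset Strict Implicit. Unset Printing Implicit Defensive.
Import GRing.Theory Num.Theory.
Local Open Scope ring_scope.

Record signed_group := SignedGroup {
  sg_car :> Type;
  sg_mul : sg_car -> sg_car -> sg_car;
  sg_one : sg_car;
  sg_inv : sg_car -> sg_car;
  sg_m1 : sg_car;
  sg_mulA : forall x y z, sg_mul x (sg_mul y z) = sg_mul (sg_mul x y) z;
  sg_mul1x : forall x, sg_mul sg_one x = x;
  sg_mulx1 : forall x, sg_mul x sg_one = x;
  sg_mulVx : forall x, sg_mul (sg_inv x) x = sg_one;
  sg_mulxV : forall x, sg_mul x (sg_inv x) = sg_one;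
  sg_m1_neq1 : sg_m1 <> sg_one;
  sg_m1_sq : sg_mul sg_m1 sg_m1 = sg_one;
  sg_m1_central : forall x, sg_mul sg_m1 x = sg_mul x sg_m1;
  sg_comm_or_anti : forall x y,
    sg_mul x y = sg_mul y x \/ sg_mul x y = sg_mul sg_m1 (sg_mul y x);
  sg_signature : forall x, sg_mul x x = sg_one \/ sg_mul x x = sg_m1
}.

Arguments sg_mul {s}. Arguments sg_one {s}. Arguments sg_inv {s}. Arguments sg_m1 {s}.

(* Commutativity function c(x,y) = x o y in {1,-1} (as an integer). *)
Definition cfun (S : signed_group) (x y : S) : int :=
  if excluded_middle_informative (sg_mul x y = sg_mul y x) then 1 else -1.

Definition dfun (S : signed_group) (x y : S) : nat :=
  if cfun x y == 1 then 0%N else 1%N.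

Definition m1pow (k : int) : int := if odd `|k|%N then -1 else 1.

Fixpoint pw (S : signed_group) (x : S) (k : nat) : S :=
  match k with 0%N => sg_one | k'.+1 => sg_mul (pw x k') x end.

Fixpoint eprodn (S : signed_group) (e : nat -> S) (k : nat -> nat) (N : nat) : S :=
  match N with
  | 0%N => sg_one
  | N'.+1 => sg_mul (eprodn e k N') (pw (e N') (k N'))
  end.

(* e^p for a 0-1 sequence p : nat -> bool, computed up to a bound N of its support *)
Definition eprod (S : signed_group) (e : nat -> S) (p : nat -> bool) (N : nat) : S :=
  eprodn e (fun n => nat_of_bool (p n)) N.

(* sequences of length L: L = None means countably infinite, L = Some m means
   indices 0..m-1 *)
Definition in_dom (L : option nat) (n : nat) : Prop :=
  match L with None => True | Some m => (n < m)%N end.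

Definition supp_bound (p : nat -> bool) (N : nat) : Prop :=
  forall n, (N <= n)%N -> p n = false.

Definition fin01 (L : option nat) (p : nat -> bool) : Prop :=
  (exists N, supp_bound p N) /\ (forall n, p n = true -> in_dom L n).

Definition basic (S : signed_group) (e : nat -> S) (L : option nat) : Prop :=
  forall (p : nat -> bool) (N : nat), fin01 L p -> supp_bound p N ->
    (exists n, p n = true) -> eprod e p N <> sg_one /\ eprod e p N <> sg_m1.

Definition anticommutative (S : signed_group) (e : nat -> S) (L : option nat) : Prop :=
  forall j k, in_dom L j -> in_dom L k -> j <> k ->
    sg_mul (e j) (e k) = sg_mul sg_m1 (sg_mul (e k) (e j)).

Definition positive_seq (S : signed_group) (e : nat -> S) (L : option nat) : Prop :=
  forall n, in_dom L n -> sg_mul (e n) (e n) = sg_one.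

Definition negative_seq (S : signed_group) (e : nat -> S) (L : option nat) : Prop :=
  forall n, in_dom L n -> sg_mul (e n) (e n) = sg_m1.

Inductive gen (S : signed_group) (g : nat -> S) (L : option nat) : S -> Prop :=
  | gen_one : gen g L sg_one
  | gen_g n : in_dom L n -> gen g L (g n)
  | gen_mul x y : gen g L x -> gen g L y -> gen g L (sg_mul x y)
  | gen_inv x : gen g L x -> gen g L (sg_inv x).

Definition len_ge2 (L : option nat) : Prop :=
  match L with None => True | Some m => (2 <= m)%N end.

Definition bq (n q : nat) : nat :=
  \sum_(j < n.+1 | (q + 4 * j <= n)%N) 'C(n, q + 4 * j).

Definition card_is (S : Type) (P : S -> Prop) (c : nat) : Prop :=
  exists l : list S, List.NoDup l /\ List.length l = c /\
    (forall x, List.In x l <-> P x).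

(* Main.v *)
Require Import Defs.
From HB Require Import structures.
From mathcomp Require Import all_boot all_algebra.
From Stdlib Require Lists.List.
Import GRing.Theory Num.Theory.
From mathcomp Require Import ring lra zify.
From Stdlib Require Import ClassicalEpsilon.
Set Implicit Arguments. Unset Strict Implicit. Unset Printing Implicit Defensive.

Local Notation "x '·' y" := (sg_mul x y) (at level 40, left associativity).
Local Notation m1 := sg_m1.


Definition sgn {S : signed_group} (n : nat) : S := pw sg_m1 n.

Lemma gA {S : signed_group} (x y z : S) : x · (y · z) = x · y · z.
Proof. exact: sg_mulA. Qed.
Lemma g1x {S : signed_group} (x : S) : sg_one · x = x. Proof. exact: sg_mul1x. Qed.
Lemma gx1 {S : signed_group} (x : S) : x · sg_one = x. Proof. exact: sg_mulx1. Qed.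

Lemma cancl {S : signed_group} (x y z : S) : x · y = x · z -> y = z.
Proof.
move=> h; have := congr1 (sg_mul (sg_inv x)) h.
by rewrite !gA sg_mulVx !g1x.
Qed.
Lemma cancr {S : signed_group} (x y z : S) : y · x = z · x -> y = z.
Proof.
move=> h; have := congr1 (fun t => t · sg_inv x) h.
by rewrite /= -!gA sg_mulxV !gx1.
Qed.

Lemma sgn_odd {S : signed_group} n : sgn n = if odd n then m1 else (sg_one : S).
Proof.
elim: n => [|n IH] /=; first by rewrite /sgn.
rewrite /sgn /= -/(sgn n) IH; case: (odd n) => /=.
  by rewrite sg_m1_sq. by rewrite g1x.
Qed.

Lemma sgnD {S : signed_group} a b : sgn (a + b) = sgn a · (sgn b : S).
Proof.
rewrite !sgn_odd oddD; case: (odd a); case: (odd b) => /=;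
by rewrite ?sg_m1_sq ?g1x ?gx1.
Qed.

Lemma sgnC {S : signed_group} a (x : S) : sgn a · x = x · sgn a.
Proof. rewrite sgn_odd; case: (odd a); by rewrite ?sg_m1_central ?g1x ?gx1. Qed.

Lemma sgn_eq {S : signed_group} a b : odd a = odd b -> sgn a = (sgn b : S).
Proof. by rewrite !sgn_odd => ->. Qed.

Lemma sgn_inj {S : signed_group} a b : sgn a = (sgn b : S) -> odd a = odd b.
Proof.
rewrite !sgn_odd; case: (odd a); case: (odd b) => //= h;
exfalso; apply: (@sg_m1_neq1 S); by rewrite h.
Qed.

Lemma sgn_mul_inj {S : signed_group} a b (x : S) : sgn a · x = sgn b · x -> odd a = odd b.
Proof. by move/cancr/sgn_inj. Qed.

Lemma sq_sgn {S : signed_group} (x : S) : exists u, x · x = sgn u.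
Proof.
case: (sg_signature x) => h; [exists 0%N | exists 1%N]; rewrite h //.
by rewrite /sgn /= g1x.
Qed.

Lemma sgnA {S : signed_group} a b (x : S) : sgn a · (sgn b · x) = sgn (a + b) · x.
Proof. by rewrite gA sgnD. Qed.

Lemma sgn0 {S : signed_group} (x : S) : sgn 0 · x = x.
Proof. by rewrite /sgn /= g1x. Qed.

Local Close Scope ring_scope.


Definition sc {S : signed_group} (x y : S) (t : nat) := x · y = sgn t · (y · x).

Lemma sc_d {S : signed_group} (x y : S) : sc x y (dfun x y).
Proof.
rewrite /sc /dfun /cfun; case: excluded_middle_informative => h /=.
  by rewrite sgn0.
case: (sg_comm_or_anti x y) => // ->. by rewrite /sgn /= g1x.
Qed.

Lemma sc_eq {S : signed_group} (x y : S) a b : odd a = odd b -> sc x y a -> sc x y b.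
Proof. by rewrite /sc => /sgn_eq ->. Qed.

Lemma sc_sym {S : signed_group} (x y : S) a : sc x y a -> sc y x a.
Proof.
rewrite /sc => h; rewrite h sgnA.
rewrite (@sgn_eq _ (a + a) 0) ?sgn0 //.
by rewrite oddD addbb.
Qed.

Lemma sc_mulr {S : signed_group} (x y z : S) a b :
  sc x y a -> sc x z b -> sc x (y · z) (a + b).
Proof.
rewrite /sc => ha hb.
rewrite gA ha -!gA hb.
rewrite (gA y) -(sgnC b y) -gA sgnA.
done.
Qed.

Lemma sc_mull {S : signed_group} (x y z : S) a b :
  sc x z a -> sc y z b -> sc (x · y) z (a + b).
Proof. move=> /sc_sym ha /sc_sym hb; apply: sc_sym; exact: sc_mulr. Qed.

Lemma sc_1r {S : signed_group} (x : S) : sc x sg_one 0.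
Proof. by rewrite /sc sgn0 g1x gx1. Qed.

Lemma sc_pwr {S : signed_group} (x y : S) a k : sc x y a -> sc x (pw y k) (a * k).
Proof.
move=> h; elim: k => [|k IH] /=; first by rewrite muln0; exact: sc_1r.
rewrite mulnS addnC; exact: sc_mulr.
Qed.

Lemma sc_pwl {S : signed_group} (x y : S) a k : sc x y a -> sc (pw x k) y (k * a).
Proof. move/sc_sym => h; apply: sc_sym; rewrite mulnC; exact: sc_pwr. Qed.

Lemma sc_Er {S : signed_group} (e : nat -> S) (x : S) (a k : nat -> nat) N :
  (forall j, (j < N)%N -> sc x (e j) (a j)) ->
  sc x (eprodn e k N) (\sum_(j < N) a j * k j)%N.
Proof.
elim: N => [|N IH] h /=; first by rewrite big_ord0; exact: sc_1r.
rewrite big_ord_recr /=; apply: sc_mulr.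
  by apply: IH => j hj; apply: h; apply: ltnW.
by apply: sc_pwr; apply: h.
Qed.

Lemma sc_El {S : signed_group} (e : nat -> S) (y : S) (a k : nat -> nat) N :
  (forall j, (j < N)%N -> sc (e j) y (a j)) ->
  sc (eprodn e k N) y (\sum_(j < N) k j * a j)%N.
Proof.
move=> h; apply: sc_sym.
have := @sc_Er _ e y a k N (fun j hj => sc_sym (h j hj)).
by rewrite (eq_bigr (fun j : 'I_N => k j * a j)%N) // => j _; rewrite mulnC.
Qed.

Lemma cfun_sc {S : signed_group} (x y : S) t : sc x y t -> cfun x y = m1pow t.
Proof.
rewrite /sc /cfun /m1pow /= => h; case: excluded_middle_informative => c /=.
  move: h; rewrite c -{1}[y · x]sgn0 => /sgn_mul_inj; case: (odd t) => //.
move: h; rewrite sgn_odd; case: (odd t) => // h.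
by rewrite g1x in h.
Qed.

Lemma dfun_sym {S : signed_group} (x y : S) : dfun x y = dfun y x.
Proof.
rewrite /dfun /cfun.
case: excluded_middle_informative => h1; case: excluded_middle_informative => h2 //.
  by case: h2.
by case: h1.
Qed.

Lemma dfun_xx {S : signed_group} (x : S) : dfun x x = 0%N.
Proof. by rewrite /dfun /cfun; case: excluded_middle_informative. Qed.

Lemma cfun_dfun {S : signed_group} (x y : S) : cfun x y = (1 - 2 * (Posz (dfun x y)))%R.
Proof. by rewrite /dfun; case: (cfun x y =P 1%R) => [->|] //; rewrite /cfun; case: excluded_middle_informative. Qed.

Local Close Scope ring_scope.


Lemma dsum_S (F : nat -> nat -> nat) N :
  (\sum_(j < N.+1) \sum_(k < N.+1 | (j < k)%N) F j k =
   \sum_(j < N) \sum_(k < N | (j < k)%N) F j k + \sum_(j < N) F j N)%N.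
Proof.
rewrite big_ord_recr /=.
have -> : (\sum_(k < N.+1 | (N < k)%N) F N k = 0)%N.
  by apply: big_pred0 => k; rewrite ltnNge -ltnS ltn_ord.
rewrite addn0.
rewrite -big_split /=; apply: eq_bigr => j _.
rewrite big_mkcond big_ord_recr /= -big_mkcond /= ltn_ord.
done.
Qed.

Lemma pwD {S : signed_group} (x : S) m n : pw x m · pw x n = pw x (m + n).
Proof.
elim: n => [|n IH] /=; first by rewrite gx1 addn0.
by rewrite addnS /= gA IH.
Qed.

Lemma main_gen {S : signed_group} (e : nat -> S) (k1 k2 : nat -> nat) N :
  eprodn e k1 N · eprodn e k2 N =
  sgn (\sum_(j < N) \sum_(k < N | (j < k)%N) dfun (e j) (e k) * k1 k * k2 j)%N
    · eprodn e (fun n => k1 n + k2 n)%N N.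
Proof.
elim: N => [|N IH] /=.
  by rewrite big_ord0 sgn0 ?g1x.
set a := pw (e N) (k1 N); set b := pw (e N) (k2 N).
have hs : sc a (eprodn e k2 N) (\sum_(j < N) (k1 N * dfun (e N) (e j)) * k2 j)%N.
  by apply: (@sc_Er _ e a (fun j => k1 N * dfun (e N) (e j))%N k2 N) => j _; apply: sc_pwl; apply: sc_d.
rewrite (dsum_S (fun j k => dfun (e j) (e k) * k1 k * k2 j)%N) -pwD -/a -/b.
rewrite -gA (gA a) hs -!gA (gA (eprodn e k1 N)) -(sgnC _ (eprodn e k1 N)) -gA.
rewrite (gA (eprodn e k1 N)) IH -gA sgnA addnC.
congr (sgn _ · _).
congr (_ + _)%N; apply: eq_bigr => j _.
by rewrite dfun_sym (mulnC (k1 N)).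
Qed.

Local Close Scope ring_scope.


Lemma PoszS (I : Type) (r : seq I) (P : pred I) (F : I -> nat) :
  Posz (\sum_(i <- r | P i) F i)%N = (\sum_(i <- r | P i) Posz (F i))%R.
Proof. by apply: (big_morph Posz PoszD). Qed.

Lemma comm_E {S : signed_group} (e : nat -> S) (p q : nat -> nat) N :
  sc (eprodn e p N) (eprodn e q N)
     (\sum_(k < N) p k * \sum_(j < N) dfun (e k) (e j) * q j)%N.
Proof.
apply: (@sc_El _ e _ (fun k => \sum_(j < N) dfun (e k) (e j) * q j)%N) => k _.
apply: (@sc_Er _ e _ (fun j => dfun (e k) (e j))) => j _; exact: sc_d.
Qed.

Lemma int_part (c : nat -> nat -> int) (d : nat -> nat -> nat) (p q : nat -> nat) N :
  (forall j k, c j k = 1 - 2 * Posz (d j k))%R ->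
  (forall j k, d j k = d k j) ->
  (\sum_(j < N) (\sum_(k < N) c j k * Posz (p k)) * Posz (q j)
    - (\sum_(n < N) Posz (p n)) * (\sum_(n < N) Posz (q n)) =
  - (2 * Posz (\sum_(k < N) p k * \sum_(j < N) d k j * q j)%N))%R.
Proof.
move=> hc hd.
have e1 : (\sum_(j < N) (\sum_(k < N) c j k * Posz (p k)) * Posz (q j) =
    \sum_(j < N) \sum_(k < N) c j k * Posz (p k) * Posz (q j))%R.
  by apply: eq_bigr => j _; rewrite mulr_suml.
have e2 : ((\sum_(n < N) Posz (p n)) * (\sum_(n < N) Posz (q n)) =
    \sum_(j < N) \sum_(k < N) Posz (p k) * Posz (q j))%R.
  rewrite mulr_suml exchange_big /=; apply: eq_bigr => j _.
  by rewrite mulr_sumr; apply: eq_bigr => k _; rewrite mulrC.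
have e3 : (Posz (\sum_(k < N) p k * \sum_(j < N) d k j * q j)%N =
    \sum_(j < N) \sum_(k < N) Posz (d j k) * Posz (p k) * Posz (q j))%R.
  rewrite PoszS (eq_bigr (fun k : 'I_N => \sum_(j < N) Posz (p k) * Posz (d k j) * Posz (q j))%R); last first.
    move=> k _; rewrite PoszM PoszS mulr_sumr; apply: eq_bigr => j _.
    by rewrite PoszM mulrA.
  rewrite exchange_big /=; apply: eq_bigr => j _; apply: eq_bigr => k _.
  rewrite hd; ring.
rewrite e1 e2 e3 -sumrB mulr_sumr -sumrN; apply: eq_bigr => j _.
rewrite -sumrB mulr_sumr -sumrN; apply: eq_bigr => k _.
rewrite hc; ring.
Qed.

Local Open Scope ring_scope.

Lemma part1 {S : signed_group} (e : nat -> S) (p q : nat -> bool) (N : nat) :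
     cfun (eprod e p N) (eprod e q N) =
     m1pow (((\sum_(j < N) (\sum_(k < N) cfun (e j) (e k) * (p k)%:Z) * (q j)%:Z)
             - (\sum_(n < N) (p n)%:Z) * (\sum_(n < N) (q n)%:Z)) %/ 2)%Z.
Proof.
rewrite (@int_part (fun j k => cfun (e j) (e k)) (fun j k => dfun (e j) (e k))
   (fun n => nat_of_bool (p n)) (fun n => nat_of_bool (q n))); last first.
- by move=> j k; rewrite dfun_sym.
- by move=> j k; rewrite cfun_dfun.
rewrite (mulrC 2) -mulNr mulzK // /m1pow abszN.
rewrite (cfun_sc (comm_E e _ _ N)) /m1pow //.
Qed.

Lemma anti_d {S : signed_group} (e : nat -> S) L j k :
  anticommutative e L -> in_dom L j -> in_dom L k -> j <> k -> dfun (e j) (e k) = 1%N.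
Proof.
move=> ha hj hk hjk; rewrite /dfun /cfun.
case: excluded_middle_informative => //= h.
exfalso; have := ha j k hj hk hjk; rewrite h -{1}[e k · e j]g1x => /cancr.
by move=> h1; apply: (@sg_m1_neq1 S).
Qed.

Lemma anti_nat {S : signed_group} (e : nat -> S) L (p q : nat -> bool) N :
  anticommutative e L -> fin01 L p -> fin01 L q ->
  ((\sum_(k < N) p k * \sum_(j < N) dfun (e k) (e j) * q j) + \sum_(k < N) p k * q k
   = (\sum_(k < N) (p k : nat)) * (\sum_(j < N) (q j : nat)))%N.
Proof.
move=> ha [_ hp] [_ hq].
rewrite big_distrl -big_split /=; apply: eq_bigr => k _.
case hpk: (p k); last by rewrite !mul0n.
rewrite !mul1n (bigD1 k) //= [in RHS](bigD1 k) //= dfun_xx mul0n add0n addnC.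
congr (_ + _)%N; apply: eq_bigr => j hjk.
case hqj: (q j); last by rewrite !muln0.
rewrite (anti_d ha (hp k hpk) (hq j hqj)) //.
by move=> e1; move: hjk; rewrite -(inj_eq val_inj) /= e1 eqxx.
Qed.

Lemma part2 {S : signed_group} (e : nat -> S) L (p q : nat -> bool) N :
  anticommutative e L -> fin01 L p -> fin01 L q ->
     cfun (eprod e p N) (eprod e q N) =
     m1pow ((\sum_(n < N) (p n)%:Z) * (\sum_(n < N) (q n)%:Z)
            - \sum_(n < N) ((p n)%:Z * (q n)%:Z)).
Proof.
move=> ha hp hq; rewrite (cfun_sc (comm_E e _ _ N)).
have h := anti_nat N ha hp hq.
congr m1pow.
have := congr1 Posz h; rewrite PoszD PoszM !PoszS => <-.
rewrite addrK; apply: eq_bigr => n _; by rewrite PoszM.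
Qed.

Local Close Scope ring_scope.


Lemma eq_eprodn {S : signed_group} (e : nat -> S) (k k' : nat -> nat) N :
  (forall n, n < N -> k n = k' n) -> eprodn e k N = eprodn e k' N.
Proof.
elim: N => [|N IH] h //=.
rewrite IH ?h // => n hn; apply: h; exact: ltnW.
Qed.

Lemma pair_count (F : nat -> nat -> nat) (p : nat -> bool) N :
  (forall j k, j < k -> F j k = p j * p k) ->
  \sum_(j < N) \sum_(k < N | j < k) F j k = 'C(\sum_(n < N) (p n : nat), 2).
Proof.
move=> hF; elim: N => [|N IH]; first by rewrite !big_ord0.
rewrite dsum_S IH big_ord_recr /=.
rewrite [X in _ + X = _](eq_bigr (fun j : 'I_N => p j * p N)); last by move=> j _; apply: hF.
rewrite -big_distrl /=.
case: (p N) => /=; last by rewrite muln0 !addn0.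
by rewrite muln1 addn1 binS bin1 addnC.
Qed.

Lemma odd_bin2 n : odd 'C(n, 2) = (n %% 4 == 2) || (n %% 4 == 3).
Proof.
elim: n => [|n IH] //.
rewrite binS bin1 oddD IH.
have hodd : odd n = odd (n %% 4) by rewrite [in LHS](divn_eq n 4) oddD oddM /= andbF.
have hS : n.+1 %% 4 = (n %% 4).+1 %% 4 by lia.
rewrite hodd hS; case: (n %% 4) (ltn_pmod n (isT : 0 < 4)) => [|[|[|[|r]]]] //.
Qed.

Lemma odd_bin2S n : odd (n + 'C(n, 2)) = (n %% 4 == 2) || (n %% 4 == 1).
Proof.
rewrite addnC; have -> : 'C(n, 2) + n = 'C(n.+1, 2) by rewrite binS bin1.
rewrite odd_bin2.
have hS : n.+1 %% 4 = (n %% 4).+1 %% 4 by lia.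
rewrite hS; case: (n %% 4) (ltn_pmod n (isT : 0 < 4)) => [|[|[|[|r]]]] //.
Qed.

Lemma eprod2 {S : signed_group} (e : nat -> S) (p : nat -> bool) N (P : nat -> Prop) u :
  (forall n, p n -> P n) -> (forall n, P n -> e n · e n = sgn u) ->
  eprodn e (fun n => 2 * p n) N = sgn (u * \sum_(n < N) (p n : nat)).
Proof.
move=> hp hu; elim: N => [|N IH] /=; first by rewrite big_ord0 muln0.
rewrite IH big_ord_recr /= mulnDr sgnD.
case hpN: (p N) => /=; last by rewrite muln0 /sgn /= gx1.
by rewrite g1x muln1 hu //; apply: hp.
Qed.

Lemma sgn1 {S : signed_group} : sgn 1 = (m1 : S).
Proof. by rewrite /sgn /= g1x. Qed.

Lemma sgn_m1 {S : signed_group} a : sgn a = (m1 : S) <-> odd a.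
Proof. rewrite -sgn1; split; [by move/sgn_inj | by move=> h; apply: sgn_eq; rewrite h]. Qed.

Lemma sq_anti {S : signed_group} (e : nat -> S) L (p : nat -> bool) N :
  anticommutative e L -> fin01 L p ->
  eprod e p N · eprod e p N =
  sgn 'C(\sum_(n < N) (p n : nat), 2) · eprodn e (fun n => 2 * p n) N.
Proof.
move=> ha [_ hp]; rewrite /eprod main_gen.
rewrite (@eq_eprodn _ e _ (fun n => 2 * p n)) => [|n _]; last by rewrite mul2n addnn.
congr (sgn _ · _); apply: (@pair_count (fun j k => dfun (e j) (e k) * p k * p j)%N) => j k hjk.
case hj: (p j); case hk: (p k) => /=; rewrite ?muln0 //.
rewrite (anti_d ha (hp j hj) (hp k hk)) //.
by move=> e1; rewrite e1 ltnn in hjk.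
Qed.

Local Open Scope ring_scope.

Lemma part4 {S : signed_group} (e : nat -> S) L :
  (anticommutative e L ->
   forall (p : nat -> bool) (N : nat),
     fin01 L p -> supp_bound p N ->
     let pp := (\sum_(n < N) p n)%N in
     sg_mul (eprod e p N) (eprod e p N) =
       sg_mul (eprodn e (fun n => (2 * p n)%N) N) (pw sg_m1 (pp * (pp - 1) %/ 2)%N) /\
     (positive_seq e L ->
        (sg_mul (eprod e p N) (eprod e p N) = sg_m1 <->
         (pp %% 4 = 2 \/ pp %% 4 = 3)%N)) /\
     (negative_seq e L ->
        (sg_mul (eprod e p N) (eprod e p N) = sg_m1 <->
         (pp %% 4 = 2 \/ pp %% 4 = 1)%N))).
Proof.
move=> ha p N hp hs pp.
have hb : (pp * (pp - 1) %/ 2 = 'C(pp, 2))%N by rewrite bin2 -divn2 subn1.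
have key := sq_anti N ha hp; rewrite -/pp in key.
split; first by rewrite key sgnC hb.
split.
- move=> hpos.
  rewrite (@eprod2 _ e p N (in_dom L) 0%N) in key; first last.
  + by move=> n hn; rewrite hpos // /sgn.
  + by case: hp.
  rewrite key mul0n -sgnD addn0 sgn_m1 odd_bin2.
  by split => [/orP[/eqP|/eqP]|[->|->]]; auto.
- move=> hneg.
  rewrite (@eprod2 _ e p N (in_dom L) 1%N) in key; first last.
  + by move=> n hn; rewrite hneg // sgn1.
  + by case: hp.
  rewrite key mul1n -sgnD addnC sgn_m1 odd_bin2S.
  by split => [/orP[/eqP|/eqP]|[->|->]]; auto.
Qed.

Local Close Scope ring_scope.


Lemma pw_even {S : signed_group} (x : S) m : exists v, pw x (2 * m) = sgn v.
Proof.
elim: m => [|m [v IH]]; first by exists 0%N.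
have [u hu] := sq_sgn x.
exists (v + u)%N; rewrite mulnS -pwD IH /= g1x hu sgnD. exact: sgnC.
Qed.

Lemma eprodn_par {S : signed_group} (e : nat -> S) (k k' m : nat -> nat) N :
  (forall n, k n = k' n + 2 * m n)%N -> exists v, eprodn e k N = sgn v · eprodn e k' N.
Proof.
move=> hk; elim: N => [|N [v IH]] /=; first by exists 0%N; rewrite sgn0.
have [w hw] := pw_even (e N) (m N).
exists (v + w)%N; rewrite IH hk -pwD hw.
rewrite -(sgnC w) gA -(gA (sgn v)) -(sgnC w) gA -sgnD -gA.
done.
Qed.

Lemma sgn_pm {S : signed_group} v : sgn v = (sg_one : S) \/ sgn v = (m1 : S).
Proof. by rewrite sgn_odd; case: (odd v); auto. Qed.

Lemma sgn_cancel {S : signed_group} a (x y : S) : sgn a · x = y -> x = sgn a · y.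
Proof.
move=> <-; rewrite sgnA (@sgn_eq _ (a + a) 0) ?sgn0 //.
by rewrite oddD addbb.
Qed.

Lemma basic_inj {S : signed_group} (e : nat -> S) L (p q : nat -> bool) N s t :
  basic e L -> fin01 L p -> fin01 L q -> supp_bound p N -> supp_bound q N ->
  sgn s · eprod e p N = sgn t · eprod e q N -> (forall n, p n = q n) /\ odd s = odd t.
Proof.
move=> hb [_ hp] [_ hq] hsp hsq heq.
set x := eprod e q N.
have [u hu] := sq_sgn x.
have hpq : forall n, (p n + q n = (p n (+) q n : nat) + 2 * (p n && q n))%N.
  by move=> n; case: (p n); case: (q n).
have [w hw] := @eprodn_par _ e (fun n => p n + q n)%N (fun n => p n (+) q n)
                 (fun n => p n && q n) N hpq.
have h1 : sgn s · (eprod e p N · x) = sgn t · sgn u.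
  by rewrite gA heq -gA hu.
rewrite /eprod /x main_gen hw sgnA sgnA -sgnD in h1.
have h2 := sgn_cancel h1; rewrite -sgnD in h2.
have [z hz] : exists z, eprodn e (fun n => nat_of_bool (p n (+) q n)) N = sgn z.
  by eexists; exact: h2.
have hall : forall n, p n = q n.
  move=> n; case hne: (p n == q n); first exact/eqP; exfalso.
  have [hn1 hnm] : eprod e (fun n => p n (+) q n) N <> sg_one /\ eprod e (fun n => p n (+) q n) N <> m1.
  apply: hb.
  - split; first by exists N => m hm; rewrite hsp ?hsq.
    move=> m; case hpm: (p m); case hqm: (q m) => //= _; [exact: hp | exact: hq].
  - by move=> m hm; rewrite hsp ?hsq.
  - by exists n; move: hne; case: (p n); case: (q n).
  case: (@sgn_pm S z) => hh.
    by apply: hn1; rewrite /eprod hz hh.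
  by apply: hnm; rewrite /eprod hz hh.
split=> //.
apply: (@sgn_mul_inj _ _ _ x); rewrite -heq /x /eprod.
by rewrite (@eq_eprodn _ e _ (fun n => q n)) // => n _; rewrite hall.
Qed.

Local Close Scope ring_scope.


Lemma In_map_iff {S : Type} (T : eqType) (f : T -> S) (s : seq T) x :
  List.In x (map f s) <-> exists t, t \in s /\ f t = x.
Proof.
elim: s => [|a s IH] /=; first by split=> // [[t []]].
split.
- case=> [<-|/IH [t [ht <-]]]; first by exists a; rewrite mem_head.
  by exists t; rewrite in_cons ht orbT.
- case=> t []; rewrite in_cons => /orP [/eqP -> <-|ht hx]; first by left.
  by right; apply/IH; exists t.
Qed.

Lemma NoDup_map {S : Type} (T : eqType) (f : T -> S) (s : seq T) :
  uniq s -> {in s &, injective f} -> List.NoDup (map f s).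
Proof.
elim: s => [|a s IH] /=; first by constructor.
move=> /andP [ha hs] hinj; constructor.
  move/In_map_iff => [t [ht e]].
  have et : t = a by apply: hinj => //; rewrite ?in_cons ?ht ?orbT ?eqxx.
  by move: ha; rewrite -et ht.
apply: IH => // x y hx hy; apply: hinj; by rewrite in_cons ?hx ?hy orbT.
Qed.

Lemma card_inj {S : Type} (T : finType) (A : {pred T}) (f : T -> S) (P : S -> Prop) :
  {in A &, injective f} -> (forall x, P x <-> exists t, t \in A /\ f t = x) ->
  card_is P #|A|.
Proof.
move=> hinj hP; exists (map f (enum A)); split; last split.
- apply: NoDup_map; first exact: enum_uniq.
  by move=> x y; rewrite !mem_enum; apply: hinj.
- by rewrite cardE; elim: (enum A) => //= a s ->.
- move=> x; rewrite hP In_map_iff.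
  by split=> [[t []]|[t []]]; rewrite ?mem_enum => h1 h2; exists t; rewrite ?mem_enum.
Qed.

Local Close Scope ring_scope.

Lemma card_le n (X : {set 'I_n}) : #|X| < n.+1.
Proof. by have := max_card X; rewrite card_ord ltnS. Qed.

Lemma card_Q n (Q : pred nat) :
  #|[set X : {set 'I_n} | Q #|X|]| = \sum_(k < n.+1 | Q k) 'C(n, k).
Proof.
rewrite -sum1_card (partition_big (fun X : {set 'I_n} => (inord #|X| : 'I_n.+1)) (fun k : 'I_n.+1 => Q k)) /=; last first.
  by move=> X; rewrite inE => hX; rewrite inordK // card_le.
apply: eq_bigr => k hk.
have -> : 'C(n, k) = #|[set X : {set 'I_n} | #|X| == k]| by rewrite card_draws card_ord.
rewrite -sum1_card.
apply: eq_bigl => X; rewrite !inE.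
have hX := card_le X.
apply/idP/idP.
  by case/andP => _ /eqP <-; rewrite inordK.
move/eqP => hXk; rewrite hXk hk /=; apply/eqP; apply: val_inj; rewrite /= inordK //.
Qed.

Lemma sum4 (f : nat -> nat) q m : q < 4 ->
  \sum_(j < m) f (q + 4 * j) = \sum_(0 <= k < 4 * m | k %% 4 == q) f k.
Proof.
move=> hq; elim: m => [|m IH]; first by rewrite big_ord0 muln0 big_geq.
rewrite big_ord_recr /= IH mulnS addnC.
rewrite [in RHS](big_cat_nat _ (n := 4 * m)) //=; last by lia.
rewrite addnC; congr (_ + _).
have h0 : (4 * m) %% 4 = 0 by lia.
have h1 : (4 * m).+1 %% 4 = 1 by lia.
have h2 : (4 * m).+2 %% 4 = 2 by lia.
have h3 : (4 * m).+3 %% 4 = 3 by lia.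
rewrite big_mkcond big_ltn; last by lia.
rewrite big_ltn; last by lia.
rewrite big_ltn; last by lia.
rewrite big_ltn; last by lia.
rewrite big_geq; last by lia.
rewrite h0 h1 h2 h3.
clear IH; case: q hq => [|[|[|[|q]]]] // _; rewrite /= ?addn0 ?add0n. all: congr f; lia.
Qed.

Lemma bq_eq n q : q < 4 -> bq n q = \sum_(k < n.+1 | k %% 4 == q) 'C(n, k).
Proof.
move=> hq; rewrite /bq.
rewrite big_mkcond /=.
rewrite (eq_bigr (fun j : 'I_n.+1 => 'C(n, q + 4 * j))); last first.
  by move=> j _; case: ifP => // /negbT; rewrite -ltnNge => /bin_small ->.
rewrite (sum4 (fun k => 'C(n, k))) //.
rewrite (big_cat_nat _ (n := n.+1)) /=; [|by []|by lia].
rewrite [X in _ + X]big1_seq ?addn0; last first.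
  by move=> k /andP [_]; rewrite mem_index_iota => /andP [hk _]; rewrite bin_small.
by rewrite big_mkord.
Qed.

Lemma bq_pair n a b : a < 4 -> b < 4 -> a != b ->
  bq n a + bq n b = \sum_(k < n.+1 | (k %% 4 == a) || (k %% 4 == b)) 'C(n, k).
Proof.
move=> ha hb hab; rewrite !bq_eq //.
rewrite [X in X + _ = _]big_mkcond [X in _ + X = _]big_mkcond -big_split [in RHS]big_mkcond /=.
apply: eq_bigr => k _.
case: eqP => [->|_]; case: eqP => [e2|_] //=; last by rewrite addn0.
by move: hab; rewrite e2 eqxx.
Qed.

Local Close Scope ring_scope.


Definition chi n (X : {set 'I_n}) (m : nat) : bool := m \in [seq val i | i <- enum X].

Lemma chi_val n (X : {set 'I_n}) (i : 'I_n) : chi X i = (i \in X).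
Proof. by rewrite /chi mem_map ?mem_enum //; exact: val_inj. Qed.

Lemma chi_supp n (X : {set 'I_n}) : supp_bound (chi X) n.
Proof.
move=> m hm; apply/negbTE/mapP => [[i _ ei]].
by move: hm; rewrite ei leqNgt ltn_ord.
Qed.

Lemma chi_fin n (X : {set 'I_n}) : fin01 (Some n) (chi X).
Proof.
split; first by exists n; exact: chi_supp.
by move=> m /mapP [i _ ->]; exact: ltn_ord.
Qed.

Lemma sum_chi n (X : {set 'I_n}) : \sum_(m < n) (chi X m : nat) = #|X|.
Proof.
rewrite -sum1_card [in RHS]big_mkcond /=; apply: eq_bigr => i _.
by rewrite chi_val; case: (i \in X).
Qed.

Lemma card_setp n (p : nat -> bool) : #|[set i : 'I_n | p i]| = \sum_(m < n) (p m : nat).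
Proof.
rewrite -sum1_card [in LHS]big_mkcond /=; apply: eq_bigr => i _.
by rewrite inE; case: (p i).
Qed.

Lemma supp_fin n (p : nat -> bool) : supp_bound p n -> fin01 (Some n) p.
Proof.
move=> hs; split; first by exists n.
move=> m hm /=; rewrite ltnNge; apply/negP => h; by rewrite hs in hm.
Qed.

Lemma part5_gen {S : signed_group} (e : nat -> S) n (Q : pred nat) :
  basic e (Some n) ->
  (forall p, supp_bound p n ->
     (eprod e p n · eprod e p n = m1 <-> Q (\sum_(m < n) (p m : nat)))) ->
  card_is (fun x : S =>
       (exists p : nat -> bool, supp_bound p n /\ eprod e p n = x) /\
       x · x = m1) (\sum_(k < n.+1 | Q k) 'C(n, k)).
Proof.
move=> hb hQ; rewrite -card_Q.
apply: (@card_inj _ _ _ (fun X : {set 'I_n} => eprod e (chi X) n)).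
- move=> X Y _ _ hXY.
  have [h _] := @basic_inj _ e _ (chi X) (chi Y) n 0 0 hb (chi_fin X) (chi_fin Y)
      (chi_supp X) (chi_supp Y) ltac:(by rewrite !sgn0).
  by apply/setP => i; rewrite -!chi_val h.
- move=> x; split.
  + move=> [[p [hs <-]] hsq].
    exists [set i : 'I_n | p i]; split.
      by rewrite inE card_setp -hQ.
    rewrite /eprod; apply: eq_eprodn => m hm.
    by rewrite (chi_val _ (Ordinal hm)) inE.
  + move=> [X [hX <-]]; split; first by exists (chi X); split => //; exact: chi_supp.
    by rewrite hQ ?sum_chi; [move: hX; rewrite inE | exact: chi_supp].
Qed.

Lemma part5 {S : signed_group} (e : nat -> S) L (he : basic e L) :
  (forall n : nat, L = Some n -> anticommutative e L ->
     let negs := fun x : S =>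
       (exists p : nat -> bool, supp_bound p n /\ eprod e p n = x) /\
       sg_mul x x = sg_m1 in
     (positive_seq e L -> card_is negs (bq n 2 + bq n 3)%N) /\
     (negative_seq e L -> card_is negs (bq n 1 + bq n 2)%N)).
Proof.
move=> n hL ha negs; subst L; split => hsg.
- rewrite (@bq_pair n 2 3) //; apply: (part5_gen (Q := fun k => (k %% 4 == 2) || (k %% 4 == 3))) => // p hs.
  have [_ [h _]] := part4 ha (supp_fin hs) hs.
  rewrite (h hsg); split => [[->|->]|/orP[/eqP|/eqP]] //; auto.
- rewrite (@bq_pair n 1 2) //; apply: (part5_gen (Q := fun k => (k %% 4 == 1) || (k %% 4 == 2))) => // p hs.
  have [_ [_ h]] := part4 ha (supp_fin hs) hs.
  rewrite (h hsg); split => [[->|->]|/orP[/eqP|/eqP]] //; auto.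
Qed.

Local Close Scope ring_scope.


Definition ind3 (b0 b1 b2 : bool) (m : nat) : bool :=
  if m == 0 then b0 else if m == 1 then b1 else if m == 2 then b2 else false.

Lemma fin3 L (b0 b1 b2 : bool) :
  in_dom L 0 -> in_dom L 1 -> (b2 -> in_dom L 2) -> fin01 L (ind3 b0 b1 b2).
Proof.
move=> h0 h1 h2; split.
  by exists 3 => m hm; rewrite /ind3; case: m hm => [|[|[|m]]].
by move=> m; rewrite /ind3; case: m => [|[|[|m]]] //= hb; apply: h2.
Qed.

Lemma supp3 (b0 b1 b2 : bool) : supp_bound (ind3 b0 b1 b2) 3.
Proof. by move=> m hm; rewrite /ind3; case: m hm => [|[|[|m]]]. Qed.

Lemma E3 {S : signed_group} (g : nat -> S) b0 b1 b2 :
  eprod g (ind3 b0 b1 b2) 3 = pw (g 0) b0 · pw (g 1) b1 · pw (g 2) b2.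
Proof. by rewrite /eprod /= g1x. Qed.

Lemma neq3 {S : signed_group} (g : nat -> S) L s t (x0 x1 x2 y0 y1 y2 : bool) :
  basic g L -> in_dom L 0 -> in_dom L 1 -> (x2 -> in_dom L 2) -> (y2 -> in_dom L 2) ->
  sgn s · eprod g (ind3 x0 x1 x2) 3 = sgn t · eprod g (ind3 y0 y1 y2) 3 ->
  [/\ x0 = y0, x1 = y1, x2 = y2 & odd s = odd t].
Proof.
move=> hb h0 h1 hx hy heq.
have [h ho] := basic_inj hb (fin3 x0 x1 h0 h1 hx) (fin3 y0 y1 h0 h1 hy) (supp3 _ _ _) (supp3 _ _ _) heq.
by split => //; [exact: (h 0) | exact: (h 1) | exact: (h 2)].
Qed.

Lemma mul_rep {S : signed_group} (e : nat -> S) (p q : nat -> bool) N s t :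
  exists u, sgn s · eprod e p N · (sgn t · eprod e q N) =
            sgn u · eprod e (fun m => p m (+) q m) N.
Proof.
have hpq : forall n, (p n + q n = (p n (+) q n : nat) + 2 * (p n && q n))%N.
  by move=> n; case: (p n); case: (q n).
have [w hw] := @eprodn_par _ e (fun n => p n + q n)%N (fun n => p n (+) q n)
                 (fun n => p n && q n) N hpq.
exists (s + t + (\sum_(j < N) \sum_(k < N | (j < k)%N) dfun (e j) (e k) * p k * q j + w))%N.
rewrite /eprod -gA (gA (eprod e p N)) -/(eprod e p N) -(sgnC t) -!gA sgnA gA.
rewrite /eprod -gA main_gen hw sgnA sgnA.
by rewrite addnA.
Qed.

Lemma inv_rep {S : signed_group} (x : S) : exists u, sg_inv x = sgn u · x.
Proof.
have [u hu] := sq_sgn x.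
exists u; apply: (@cancl _ x).
rewrite sg_mulxV gA -sgnC -gA hu -sgnD (@sgn_eq _ (u + u) 0) //.
by rewrite oddD addbb.
Qed.

Lemma ffalse (P : Prop) : false -> P. Proof. by []. Qed.

Definition rep {S : signed_group} (g : nat -> S) s b0 b1 b2 := sgn s · eprod g (ind3 b0 b1 b2) 3.

Lemma sgn_m1' {S : signed_group} s (x : S) : m1 · (sgn s · x) = sgn (1 + s) · x.
Proof. by rewrite -sgn1 sgnA. Qed.

Lemma anti_rep {S : signed_group} (g : nat -> S) L s t (x0 x1 x2 y0 y1 y2 : bool) :
  basic g L -> in_dom L 0 -> in_dom L 1 -> (x2 -> in_dom L 2) -> (y2 -> in_dom L 2) ->
  (forall x y, gen g L x -> gen g L y ->
        x <> sg_one -> x <> sg_m1 -> y <> sg_one -> y <> sg_m1 ->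
        x <> y -> x <> sg_mul sg_m1 y ->
        sg_mul x y = sg_mul sg_m1 (sg_mul y x)) ->
  [|| x0, x1 | x2] -> [|| y0, y1 | y2] -> [|| x0 != y0, x1 != y1 | x2 != y2] ->
  gen g L (rep g s x0 x1 x2) -> gen g L (rep g t y0 y1 y2) ->
  rep g s x0 x1 x2 · rep g t y0 y1 y2 = m1 · (rep g t y0 y1 y2 · rep g s x0 x1 x2).
Proof.
move=> hb h0 h1 hx hy H nx ny nxy gx gy.
have one : (sg_one : S) = rep g 0 false false false by rewrite /rep E3 /= sgn0 !g1x.
have mone : (m1 : S) = rep g 1 false false false by rewrite /rep E3 /= sgn1 !gx1.
apply: H => // [e1|e1|e1|e1|e1|e1].
- rewrite one /rep in e1; have [e0 e1' e2 _] := neq3 hb h0 h1 hx (@ffalse _) e1.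
  by move: nx; rewrite e0 e1' e2.
- rewrite mone /rep in e1; have [e0 e1' e2 _] := neq3 hb h0 h1 hx (@ffalse _) e1.
  by move: nx; rewrite e0 e1' e2.
- rewrite one /rep in e1; have [e0 e1' e2 _] := neq3 hb h0 h1 hy (@ffalse _) e1.
  by move: ny; rewrite e0 e1' e2.
- rewrite mone /rep in e1; have [e0 e1' e2 _] := neq3 hb h0 h1 hy (@ffalse _) e1.
  by move: ny; rewrite e0 e1' e2.
- rewrite /rep in e1; have [e0 e1' e2 _] := neq3 hb h0 h1 hx hy e1.
  by move: nxy; rewrite e0 e1' e2 !eqxx.
- rewrite /rep sgn_m1' in e1; have [e0 e1' e2 _] := neq3 hb h0 h1 hx hy e1.
  by move: nxy; rewrite e0 e1' e2 !eqxx.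
Qed.

Lemma odd_b (b : bool) : odd b = b. Proof. by case: b. Qed.

Lemma part3 {S : signed_group} (L' : option nat) (g : nat -> S) :
     basic g L' -> len_ge2 L' ->
     (forall x y, gen g L' x -> gen g L' y ->
        x <> sg_one -> x <> sg_m1 -> y <> sg_one -> y <> sg_m1 ->
        x <> y -> x <> sg_mul sg_m1 y ->
        sg_mul x y = sg_mul sg_m1 (sg_mul y x)) ->
     L' = Some 2%N /\ card_is (gen g L') 8.
Proof.
move=> hb hl H.
have h0 : in_dom L' 0 by destruct L' as [m|] => //=; move: hl => /= hl; lia.
have h1 : in_dom L' 1 by destruct L' as [m|] => //=; move: hl => /= hl; lia.
have ra : g 0 = rep g 0 true false false by rewrite /rep E3 /= sgn0 !g1x !gx1.
have rb : g 1 = rep g 0 false true false by rewrite /rep E3 /= sgn0 !g1x !gx1.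
have ga : gen g L' (rep g 0 true false false) by rewrite -ra; exact: gen_g.
have gb : gen g L' (rep g 0 false true false) by rewrite -rb; exact: gen_g.
have hba := @anti_rep _ g L' 0 0 false true false true false false hb h0 h1 (@ffalse _) (@ffalse _) H isT isT isT gb ga.
rewrite -ra -rb in hba.
have hL : L' = Some 2.
  have [h2|nh2] : in_dom L' 2 \/ ~ in_dom L' 2.
    by destruct L' as [m|] => /=; [case: (2 < m); auto | auto].
  - exfalso.
    have rc : g 2 = rep g 0 false false true by rewrite /rep E3 /= sgn0 !g1x.
    have rab : g 0 · g 1 = rep g 0 true true false by rewrite /rep E3 /= sgn0 !g1x !gx1.
    have gc : gen g L' (rep g 0 false false true) by rewrite -rc; exact: gen_g.
    have gab : gen g L' (rep g 0 true true false) by rewrite -rab; apply: gen_mul; exact: gen_g.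
    have hca := @anti_rep _ g L' 0 0 false false true true false false hb h0 h1 (fun _ => h2) (@ffalse _) H isT isT isT gc ga.
    have hcb := @anti_rep _ g L' 0 0 false false true false true false hb h0 h1 (fun _ => h2) (@ffalse _) H isT isT isT gc gb.
    have habc := @anti_rep _ g L' 0 0 true true false false false true hb h0 h1 (@ffalse _) (fun _ => h2) H isT isT isT gab gc.
    rewrite -ra -rb -rc -rab in hca hcb habc.
    have hX : g 2 · (g 0 · g 1) = g 0 · g 1 · g 2.
      rewrite gA hca -!gA hcb (gA (g 0) m1) -sg_m1_central -gA gA sg_m1_sq g1x.
      by rewrite !gA.
    rewrite hX -{1}[g 0 · g 1 · g 2]g1x in habc.
    by apply: (@sg_m1_neq1 S); symmetry; apply: cancr habc.
  - destruct L' as [m|] => //=.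
    move: hl nh2 => /= hl hn; congr Some; lia.
split=> //; subst L'.
have hm1 : gen g (Some 2) m1.
  have -> : m1 = g 1 · g 0 · (sg_inv (g 1) · sg_inv (g 0)).
    by rewrite hba -!gA (gA (g 1)) sg_mulxV g1x sg_mulxV gx1.
  by apply: gen_mul; apply: gen_mul; try apply: gen_inv; apply: gen_g.
have hsgn : forall s : bool, gen g (Some 2) (sgn s).
  by case; [rewrite sgn1 | exact: gen_one].
have hpw : forall i (b : bool), i < 2 -> gen g (Some 2) (pw (g i) b).
  move=> i [] hi /=; last exact: gen_one.
  by apply: gen_mul; [exact: gen_one | exact: gen_g].
have hE : forall b0 b1 : bool, gen g (Some 2) (eprod g (ind3 b0 b1 false) 3).
  move=> b0 b1; rewrite E3 /=; apply: gen_mul; last exact: gen_one.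
  by apply: gen_mul; apply: hpw.
have -> : 8 = #|(predT : {pred bool * bool * bool})| by rewrite cardT -cardE !card_prod card_bool.
apply: (@card_inj _ _ _ (fun t : bool * bool * bool => rep g t.1.1 t.1.2 t.2 false)).
- move=> [[s a0] a1] [[t b0] b1] _ _ /= e.
  have [-> -> _ ho] := neq3 hb h0 h1 (@ffalse _) (@ffalse _) e.
  by rewrite !odd_b in ho; rewrite ho.
- move=> x; split; last first.
    by move=> [[[s a0] a1] [_ <-]] /=; rewrite /rep; apply: gen_mul.
  elim=> {x}.
  + exists (false, false, false); split => //.
    by rewrite /rep E3 /= sgn0 !g1x.
  + move=> [|[|n]] hn /=.
    * by exists (false, true, false); split => //; rewrite ra.
    * by exists (false, false, true); split => //; rewrite rb.
    * by move: hn => /=; lia.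
  + move=> x y _ [[[s a0] a1] [_ <-]] _ [[[t b0] b1] [_ <-]] /=.
    have [u hu] := @mul_rep _ g (ind3 a0 a1 false) (ind3 b0 b1 false) 3 s t.
    exists (odd u, a0 (+) b0, a1 (+) b1); split => //=.
    rewrite /rep hu (@sgn_eq _ (odd u) u) ?odd_b //; congr (_ · _).
  + move=> x _ [[[s a0] a1] [_ <-]] /=.
    have [u hu] := inv_rep (rep g s a0 a1 false).
    exists (odd (u + s), a0, a1); split => //=.
    by rewrite hu /rep sgnA (@sgn_eq _ (odd (u + s)) (u + s)) ?odd_b.
Qed.

Local Close Scope ring_scope.

Unset Implicit Arguments.
Local Open Scope ring_scope.

Theorem lemma3p1 (S : signed_group) (L : option nat) (e : nat -> S)
  (he : basic e L) :
  (* main formula: e^p e^q = (-1)^{sum_j sum_{k>j} d_jk p_k q_j} e^{p+q} *)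
  (forall (p q : nat -> bool) (N : nat),
     fin01 L p -> fin01 L q -> supp_bound p N -> supp_bound q N ->
     sg_mul (eprod e p N) (eprod e q N) =
     sg_mul (pw sg_m1 (\sum_(j < N) \sum_(k < N | (j < k)%N)
                         (dfun (e j) (e k) * p k * q j)%N)%N)
            (eprodn e (fun n => (p n + q n)%N) N)) /\
  (* (1) *)
  (forall (p q : nat -> bool) (N : nat),
     fin01 L p -> fin01 L q -> supp_bound p N -> supp_bound q N ->
     cfun (eprod e p N) (eprod e q N) =
     m1pow (((\sum_(j < N) (\sum_(k < N) cfun (e j) (e k) * (p k)%:Z) * (q j)%:Z)
             - (\sum_(n < N) (p n)%:Z) * (\sum_(n < N) (q n)%:Z)) %/ 2)%Z) /\
  (* (2) *)
  (anticommutative e L ->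
   forall (p q : nat -> bool) (N : nat),
     fin01 L p -> fin01 L q -> supp_bound p N -> supp_bound q N ->
     cfun (eprod e p N) (eprod e q N) =
     m1pow ((\sum_(n < N) (p n)%:Z) * (\sum_(n < N) (q n)%:Z)
            - \sum_(n < N) ((p n)%:Z * (q n)%:Z))) /\
  (* (3) *)
  (forall (L' : option nat) (g : nat -> S),
     basic g L' -> len_ge2 L' ->
     (forall x y, gen g L' x -> gen g L' y ->
        x <> sg_one -> x <> sg_m1 -> y <> sg_one -> y <> sg_m1 ->
        x <> y -> x <> sg_mul sg_m1 y ->
        sg_mul x y = sg_mul sg_m1 (sg_mul y x)) ->
     L' = Some 2%N /\ card_is (gen g L') 8) /\
  (* (4) *)
  (anticommutative e L ->
   forall (p : nat -> bool) (N : nat),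
     fin01 L p -> supp_bound p N ->
     let pp := (\sum_(n < N) p n)%N in
     sg_mul (eprod e p N) (eprod e p N) =
       sg_mul (eprodn e (fun n => (2 * p n)%N) N) (pw sg_m1 (pp * (pp - 1) %/ 2)%N) /\
     (positive_seq e L ->
        (sg_mul (eprod e p N) (eprod e p N) = sg_m1 <->
         (pp %% 4 = 2 \/ pp %% 4 = 3)%N)) /\
     (negative_seq e L ->
        (sg_mul (eprod e p N) (eprod e p N) = sg_m1 <->
         (pp %% 4 = 2 \/ pp %% 4 = 1)%N))) /\
  (* (5) *)
  (forall n : nat, L = Some n -> anticommutative e L ->
     let negs := fun x : S =>
       (exists p : nat -> bool, supp_bound p n /\ eprod e p n = x) /\
       sg_mul x x = sg_m1 in
     (positive_seq e L -> card_is negs (bq n 2 + bq n 3)%N) /\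
     (negative_seq e L -> card_is negs (bq n 1 + bq n 2)%N)).
Proof.
split; first by move=> p q N _ _ _ _; exact: main_gen.
split; first by move=> p q N _ _ _ _; exact: part1.
split; first by move=> ha p q N hp hq _ _; exact: (part2 N ha hp hq).
split; first by move=> L2 g; exact: part3.
split; first exact: part4.
exact: part5.
Qed.
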